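(* The $2\times2\times2$ quaternion tensor $$T=\left(\begin{bmatrix}1&0\\0&1\end{bmatrix};\begin{bmatrix}0&1\\0&0\end{bmatrix}\right)$$ has $\mathrm{rank}(T)=3$.
   Context: $\mathbb{H}$ denotes the real quaternions. An $n_1\times n_2\times n_3$ quaternion tensor is an array $T=(T_{ijk})$ with entries in $\mathbb{H}$, $1\le i\le n_1$, $1\le j\le n_2$, $1\le k\le n_3$; it is written $T=(A_1;\dots;A_{n_2})$ where the frontal slice $A_j$ is the $n_1\times n_3$ matrix $(T_{ijk})_{i,k}$. A nonzero tensor is simple if $T_{ijk}=a_ib_jc_k$ (quaternion product in this order) for some $\vec a\in\mathbb{H}^{n_1},\vec b\in\mathbb{H}^{n_2},\vec c\in\mathbb{H}^{n_3}$. The rank of $T$ is the least number of simple tensors summing to $T$. *)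

(* Defs.v *)
From mathcomp Require Import all_boot all_order all_algebra.
From mathcomp Require Import reals.
Set Implicit Arguments. Unset Strict Implicit. Unset Printing Implicit Defensive.
Import Order.TTheory GRing.Theory Num.Theory.
Local Open Scope ring_scope.

Record quat (R : realType) := Quat { qre : R; qi : R; qj : R; qk : R }.

Definition qzero (R : realType) : quat R := Quat 0 0 0 0.
Definition qone (R : realType) : quat R := Quat 1 0 0 0.

Definition qadd (R : realType) (p q : quat R) : quat R :=
  Quat (qre p + qre q) (qi p + qi q) (qj p + qj q) (qk p + qk q).

(* Hamilton product: i^2 = j^2 = k^2 = ijk = -1. *)
Definition qmul (R : realType) (p q : quat R) : quat R :=
  Quat (qre p * qre q - qi p * qi q - qj p * qj q - qk p * qk q)
       (qre p * qi q + qi p * qre q + qj p * qk q - qk p * qj q)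
       (qre p * qj q - qi p * qk q + qj p * qre q + qk p * qi q)
       (qre p * qk q + qi p * qj q - qj p * qi q + qk p * qre q).

Definition qtensor (R : realType) (n1 n2 n3 : nat) :=
  'I_n1 -> 'I_n2 -> 'I_n3 -> quat R.

Definition qtensor_zero (R : realType) (n1 n2 n3 : nat) : qtensor R n1 n2 n3 :=
  fun _ _ _ => qzero R.

Definition simple_qtensor (R : realType) (n1 n2 n3 : nat)
    (T : qtensor R n1 n2 n3) : Prop :=
  (exists i j k, T i j k <> qzero R) /\
  exists (a : 'I_n1 -> quat R) (b : 'I_n2 -> quat R) (c : 'I_n3 -> quat R),
    forall i j k, T i j k = qmul (qmul (a i) (b j)) (c k).

Definition sum_of_simple (R : realType) (n1 n2 n3 : nat) (r : nat)
    (T : qtensor R n1 n2 n3) : Prop :=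
  exists S : 'I_r -> qtensor R n1 n2 n3,
    (forall l, simple_qtensor (S l)) /\
    forall i j k, T i j k = \big[@qadd R/qzero R]_(l < r) S l i j k.

Definition qtensor_rank_is (R : realType) (n1 n2 n3 : nat)
    (T : qtensor R n1 n2 n3) (r : nat) : Prop :=
  sum_of_simple r T /\ forall r', sum_of_simple r' T -> (r <= r')%N.

(* The tensor T = (A_1; A_2), A_1 = [[1,0],[0,1]], A_2 = [[0,1],[0,0]],
   with T_{ijk} = (A_j)_{ik} (indices 0-based). *)
Definition T_ex (R : realType) : qtensor R 2 2 2 :=
  fun i j k =>
    if (j == 0 :> nat) then (if (i == k :> nat) then qone R else qzero R)
    else (if ((i == 0 :> nat) && (k == 1 :> nat)) then qone R else qzero R).

(* Main.v *)
Require Import Defs.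
From mathcomp Require Import all_boot all_order all_algebra.
From mathcomp Require Import reals.
From mathcomp Require Import ring lra.
From HB Require Import structures.
From Stdlib Require Import Classical.
Set Implicit Arguments. Unset Strict Implicit. Unset Printing Implicit Defensive.
Import Order.TTheory GRing.Theory Num.Theory.

Section Q.
Local Open Scope ring_scope.
Variable R : realType.
Implicit Types p q : quat R.

Lemma qext p q : qre p = qre q -> qi p = qi q -> qj p = qj q -> qk p = qk q -> p = q.
Proof. by case: p => ????; case: q => ???? /= -> -> -> ->. Qed.

Ltac qr := repeat match goal with x : quat R |- _ => case: x => ???? end;
  rewrite /qmul /qadd /qzero /qone /=; f_equal; ring.

Lemma qmulq1 p : qmul p (qone R) = p. Proof. qr. Qed.
Lemma qmul1q p : qmul (qone R) p = p. Proof. qr. Qed.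
Lemma qmulq0 p : qmul p (qzero R) = qzero R. Proof. qr. Qed.
Lemma qmul0q p : qmul (qzero R) p = qzero R. Proof. qr. Qed.
Lemma qaddq0 p : qadd p (qzero R) = p. Proof. qr. Qed.
Lemma qadd0q p : qadd (qzero R) p = p. Proof. qr. Qed.
Lemma qaddC p q : qadd p q = qadd q p. Proof. qr. Qed.

Lemma qone_neq0 : qone R <> qzero R.
Proof. by move/(f_equal (@qre R)) => /= /eqP; rewrite oner_eq0. Qed.

Definition qN p := qre p ^+ 2 + qi p ^+ 2 + qj p ^+ 2 + qk p ^+ 2.

Lemma qNM p q : qN (qmul p q) = qN p * qN q.
Proof. case: p => ????; case: q => ????; rewrite /qN /qmul /=; ring. Qed.

Lemma qN0 p : qN p = 0 -> p = qzero R.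
Proof.
case: p => a b c d; rewrite /qN /= => H.
have ha : a = 0 by nra.
have hb : b = 0 by nra.
have hc : c = 0 by nra.
have hd : d = 0 by nra.
by rewrite ha hb hc hd.
Qed.

Lemma qmul_eq0 p q : qmul p q = qzero R -> p = qzero R \/ q = qzero R.
Proof.
move=> H; have : qN (qmul p q) = 0 by rewrite H /qN /=; ring.
rewrite qNM => /eqP; rewrite mulf_eq0 => /orP [/eqP/qN0|/eqP/qN0]; auto.
Qed.

Lemma annih X Y : exists w0 w1, ~ (w0 = qzero R /\ w1 = qzero R) /\
  qadd (qmul w0 X) (qmul w1 Y) = qzero R.
Proof.
case: (classic (Y = qzero R)) => [->|HY].
  exists (qzero R), (qone R); split; first by case=> _; apply: qone_neq0.
  by rewrite qmul0q qmulq0 qadd0q.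
exists (@Quat R (qN Y) 0 0 0), (qmul X (@Quat R (- qre Y) (qi Y) (qj Y) (qk Y))).
split.
  case=> H _; apply: HY; apply: qN0; exact: (f_equal (@qre R) H).
case: X => ????; case: Y {HY} => ????; rewrite /qN /qmul /qadd /qzero /=; f_equal; ring.
Qed.

Lemma qmulA (x y z : quat R) : qmul x (qmul y z) = qmul (qmul x y) z.
Proof. qr. Qed.
Lemma qmulDr (x y z : quat R) : qmul x (qadd y z) = qadd (qmul x y) (qmul x z).
Proof. qr. Qed.
Lemma qmulDl (x y z : quat R) : qmul (qadd x y) z = qadd (qmul x z) (qmul y z).
Proof. qr. Qed.
Lemma qaddACA (a b c d : quat R) : qadd (qadd a b) (qadd c d) = qadd (qadd a c) (qadd b d).
Proof. qr. Qed.

Lemma comb (w0 w1 X1 Y1 X2 Y2 b b' U1 U2 : quat R) :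
  qadd (qmul w0 (qadd (qmul (qmul X1 b) U1) (qmul (qmul X2 b') U2)))
       (qmul w1 (qadd (qmul (qmul Y1 b) U1) (qmul (qmul Y2 b') U2))) =
  qadd (qmul (qmul (qadd (qmul w0 X1) (qmul w1 Y1)) b) U1)
       (qmul (qmul (qadd (qmul w0 X2) (qmul w1 Y2)) b') U2).
Proof. by rewrite !qmulDr !qmulDl !qmulA qaddACA. Qed.

Lemma logicL (s b g U V w0 w1 : quat R) : ~ (w0 = qzero R /\ w1 = qzero R) ->
  qmul (qmul s b) U = w0 -> qmul (qmul s b) V = w1 ->
  qmul (qmul s g) U = qzero R -> qmul (qmul s g) V = w0 -> g = qzero R.
Proof.
move=> Hw A B C D.
have sg0 : qmul s g = qzero R.
  case: (qmul_eq0 C) => [//|U0]; subst U.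
  move: A; rewrite qmulq0 => A; rewrite -A in D Hw.
  case: (qmul_eq0 D) => [//|V0]; subst V.
  by move: B; rewrite qmulq0 => B; case: Hw.
case: (qmul_eq0 sg0) => [s0|//]; subst s.
by move: A B; rewrite !qmul0q => A B; case: Hw.
Qed.

Lemma core_half (X1 Y1 X2 Y2 b1 b2 g1 g2 U1 V1 U2 V2 : quat R) :
 qadd (qmul (qmul X1 b1) U1) (qmul (qmul X2 b2) U2) = qone R ->
 qadd (qmul (qmul X1 b1) V1) (qmul (qmul X2 b2) V2) = qzero R ->
 qadd (qmul (qmul Y1 b1) U1) (qmul (qmul Y2 b2) U2) = qzero R ->
 qadd (qmul (qmul Y1 b1) V1) (qmul (qmul Y2 b2) V2) = qone R ->
 qadd (qmul (qmul X1 g1) U1) (qmul (qmul X2 g2) U2) = qzero R ->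
 qadd (qmul (qmul X1 g1) V1) (qmul (qmul X2 g2) V2) = qone R ->
 qadd (qmul (qmul Y1 g1) U1) (qmul (qmul Y2 g2) U2) = qzero R ->
 qadd (qmul (qmul Y1 g1) V1) (qmul (qmul Y2 g2) V2) = qzero R ->
 g1 = qzero R.
Proof.
move=> E1 E2 E3 E4 E5 E6 E7 E8.
have [w0 [w1 [Hw Ha]]] := annih X2 Y2.
have A := comb w0 w1 X1 Y1 X2 Y2 b1 b2 U1 U2.
have B := comb w0 w1 X1 Y1 X2 Y2 b1 b2 V1 V2.
have C := comb w0 w1 X1 Y1 X2 Y2 g1 g2 U1 U2.
have D := comb w0 w1 X1 Y1 X2 Y2 g1 g2 V1 V2.
rewrite E1 E3 Ha qmulq1 qmulq0 !qmul0q !qaddq0 in A.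
rewrite E2 E4 Ha qmulq1 qmulq0 !qmul0q !qaddq0 qadd0q in B.
rewrite E5 E7 Ha !qmulq0 !qmul0q !qaddq0 in C.
rewrite E6 E8 Ha qmulq1 qmulq0 !qmul0q !qaddq0 in D.
exact: (logicL Hw (esym A) (esym B) (esym C) (esym D)).
Qed.

Lemma core (X1 Y1 X2 Y2 b1 b2 g1 g2 U1 V1 U2 V2 : quat R) :
 qadd (qmul (qmul X1 b1) U1) (qmul (qmul X2 b2) U2) = qone R ->
 qadd (qmul (qmul X1 b1) V1) (qmul (qmul X2 b2) V2) = qzero R ->
 qadd (qmul (qmul Y1 b1) U1) (qmul (qmul Y2 b2) U2) = qzero R ->
 qadd (qmul (qmul Y1 b1) V1) (qmul (qmul Y2 b2) V2) = qone R ->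
 qadd (qmul (qmul X1 g1) U1) (qmul (qmul X2 g2) U2) = qzero R ->
 qadd (qmul (qmul X1 g1) V1) (qmul (qmul X2 g2) V2) = qone R ->
 qadd (qmul (qmul Y1 g1) U1) (qmul (qmul Y2 g2) U2) = qzero R ->
 qadd (qmul (qmul Y1 g1) V1) (qmul (qmul Y2 g2) V2) = qzero R -> False.
Proof.
move=> E1 E2 E3 E4 E5 E6 E7 E8.
have g10 := core_half E1 E2 E3 E4 E5 E6 E7 E8.
have g20 : g2 = qzero R.
  by apply: (core_half (X1:=X2) (Y1:=Y2) (X2:=X1) (Y2:=Y1) (b1:=b2) (b2:=b1)
     (g1:=g2) (g2:=g1) (U1:=U2) (V1:=V2) (U2:=U1) (V2:=V1)); rewrite qaddC.
move: E6; rewrite g10 g20 !qmulq0 !qmul0q qaddq0 => /esym; exact: qone_neq0.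
Qed.
Lemma qaddA (x y z : quat R) : qadd x (qadd y z) = qadd (qadd x y) z.
Proof. qr. Qed.
End Q.

HB.instance Definition _ (R : realType) :=
  Monoid.isLaw.Build (quat R) (qzero R) (@qadd R) (@qaddA R) (@qadd0q R) (@qaddq0 R).

Definition aa (R : realType) (l : 'I_3) (i : 'I_2) : quat R :=
  if (l == 2 :> nat) then (if (i == 0 :> nat) then qone R else qzero R)
  else (if (i == l :> nat) then qone R else qzero R).
Definition bb (R : realType) (l : 'I_3) (j : 'I_2) : quat R :=
  if (l == 2 :> nat) then (if (j == 1 :> nat) then qone R else qzero R)
  else (if (j == 0 :> nat) then qone R else qzero R).
Definition cc (R : realType) (l : 'I_3) (k : 'I_2) : quat R :=
  if (l == 2 :> nat) then (if (k == 1 :> nat) then qone R else qzero R)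
  else (if (k == l :> nat) then qone R else qzero R).
Definition Sx (R : realType) (l : 'I_3) : qtensor R 2 2 2 :=
  fun i j k => qmul (qmul (aa R l i) (bb R l j)) (cc R l k).

Theorem mainTheorem6 (R : realType) : qtensor_rank_is (T_ex R) 3.
Proof.
split.
- exists (Sx R); split.
  + move=> l; split; last by exists (aa R l), (bb R l), (cc R l).
    case: l => [[|[|[|l]]] Hl] //.
    * exists ord0, ord0, ord0; rewrite /Sx /aa /bb /cc /= !qmul1q; exact: qone_neq0.
    * exists ord_max, ord0, ord_max; rewrite /Sx /aa /bb /cc /= !qmul1q; exact: qone_neq0.
    * exists ord0, ord_max, ord_max; rewrite /Sx /aa /bb /cc /= !qmul1q; exact: qone_neq0.
  + move=> i j k; rewrite !big_ord_recr big_ord0 /=.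
    case: i => [[|[|i]] Hi] //; case: j => [[|[|j]] Hj] //; case: k => [[|[|k]] Hk] //;
    rewrite /T_ex /Sx /aa /bb /cc /=; apply: qext => /=; ring.
- move=> r [S [HS Hsum]].
  case: r S HS Hsum => [|[|[|r]]] S HS Hsum //.
  + have := Hsum ord0 ord0 ord0; rewrite big_ord0 /T_ex /=. by move/qone_neq0.
  + have [_ [a [b [c E]]]] := HS ord_max.
    have H i j k : T_ex R i j k = qmul (qmul (a i) (b j)) (c k).
      by rewrite Hsum big_ord_recr big_ord0 /= qadd0q E.
    have E1 := H ord0 ord0 ord0; have E2 := H ord0 ord0 ord_max;
    have E3 := H ord_max ord0 ord_max.
    rewrite /T_ex /= in E1 E2 E3.
    case: (qmul_eq0 (esym E2)) => Z.
      by by move: E1; rewrite Z qmul0q => /qone_neq0.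
    by move: E3; rewrite Z qmulq0 => /qone_neq0.
  + have [_ [a1 [b1 [c1 E1]]]] := HS (widen_ord (leqnSn 1) ord_max).
    have [_ [a2 [b2 [c2 E2]]]] := HS ord_max.
    have H i j k : T_ex R i j k = qadd (qmul (qmul (a1 i) (b1 j)) (c1 k))
                                       (qmul (qmul (a2 i) (b2 j)) (c2 k)).
      by rewrite Hsum !big_ord_recr big_ord0 /= qadd0q E1 E2.
    have F1 := H ord0 ord0 ord0; have F2 := H ord0 ord0 ord_max;
    have F3 := H ord_max ord0 ord0; have F4 := H ord_max ord0 ord_max;
    have F5 := H ord0 ord_max ord0; have F6 := H ord0 ord_max ord_max;
    have F7 := H ord_max ord_max ord0; have F8 := H ord_max ord_max ord_max.
    rewrite /T_ex /= in F1 F2 F3 F4 F5 F6 F7 F8.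
    case: (core (esym F1) (esym F2) (esym F3) (esym F4) (esym F5) (esym F6)
                 (esym F7) (esym F8)).
Qed.
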